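(* Let $n\in\mathbb{N}$ and $\nu^*(u) = (\sin(nu), -\cos(nu))^{\top}$ for $u\in\mathbb{S}^1_{2\pi}$. Let $X^*:\mathbb{S}^1_{2\pi}\to\mathbb{R}^2$ be a non-constant map such that $(X^*,\nu^* )$ is a Legendre curve, and let $\lambda^*:[0,\infty)\to\mathbb{R}$ with $\lambda^*(0)=1$. Then $(X(u,t),\nu(u,t)) := (\lambda^*(t)X^*(u),\nu^*(u))$ is an inverse curvature flow (of class $C([0,\infty);C^1)\cap C^\infty(\mathbb{S}^1_{2\pi}\times(0,\infty))$) if and only if $$\lambda^*(t) = e^{(1-\frac{m^2}{n^2})t}\quad (t\ge 0),$$ $$X^*(u) = C_1\begin{pmatrix} \frac{n}{n^2-m^2}\sin(nu)\cos(mu) - \frac{m}{n^2-m^2}\cos(nu)\sin(mu)\\ -\frac{n}{n^2-m^2}\cos(nu)\cos(mu) - \frac{m}{n^2-m^2}\sin(nu)\sin(mu)\end{pmatrix} + C_2\begin{pmatrix} \frac{n}{n^2-m^2}\sin(nu)\sin(mu) + \frac{m}{n^2-m^2}\cos(nu)\cos(mu)\\ -\frac{n}{n^2-m^2}\cos(nu)\sin(mu) + \frac{m}{n^2-m^2}\sin(nu)\cos(mu)\end{pmatrix}$$ for $u\in\mathbb{S}^1_{2\pi}$, where the constants $m, C_1, C_2$ satisfy one of: (i) $m\in\mathbb{N}\setminus\{n\}$ and $(C_1,C_2)\in\mathbb{R}^2\setminus\{(0,0)\}$; or (ii) $m=0$, $C_1\neq0$, $C_2=0$. Moreover, in this case the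 Legendre curvature $(\ell^*,\beta^* )$ of $(X^*,\nu^* )$ is $\ell^*(u)=n$, $\beta^*(u) = C_1\cos(mu)+C_2\sin(mu)$.
   Context: $\mathbb{S}^1_{2\pi} = \mathbb{R}/2\pi\mathbb{Z}$ and $\mathbb{S}^1\subset\mathbb{R}^2$ is the unit circle; $J$ denotes anticlockwise rotation by $\pi/2$. A Legendre curve is a $C^1$ pair $(X,\nu):\mathbb{S}^1_{2\pi}\to\mathbb{R}^2\times\mathbb{S}^1$ with $\langle \partial_u X,\nu\rangle = 0$; $\mu=J\nu$; its Legendre curvature is $\ell = \langle\partial_u\nu,\mu\rangle$, $\beta=\langle\partial_uX,\mu\rangle$; it is $\ell$-convex if $\ell>0$. A flow of Legendre curves is a map $(X,\nu):\mathbb{S}^1_{2\pi}\times[0,\infty)\to\mathbb{R}^2\times\mathbb{S}^1$ each of whose time slices is a Legendre curve, with normal velocity $N=\langle\partial_tX,\nu\rangle$. An inverse curvature flow is such a flow, smooth for $t>0$, whose time slices are $\ell$-convex for $t>0$ and with $N=\beta/\ell$ on $\mathbb{S}^1_{2\pi}\times(0,\infty)$. *)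

(* Defs.v *)
From Stdlib Require Import Reals List.
From Coquelicot Require Import Coquelicot.
Open Scope R_scope.

Definition dot (p q : R * R) : R := fst p * fst q + snd p * snd q.

Definition J (p : R * R) : R * R := (- snd p, fst p).

Definition on_unit_circle (p : R * R) : Prop := fst p ^ 2 + snd p ^ 2 = 1.

(** Maps on S^1_{2pi} = R/2piZ are represented as 2pi-periodic maps on R. *)
Definition periodic2pi (X : R -> R * R) : Prop := forall u, X (u + 2 * PI) = X u.

Definition C1_fun (f : R -> R) : Prop :=
  (forall u, ex_derive f u) /\ (forall u, continuous (Derive f) u).

Definition C1_curve (X : R -> R * R) : Prop :=
  C1_fun (fun u => fst (X u)) /\ C1_fun (fun u => snd (X u)).

Definition dcurve (X : R -> R * R) (u : R) : R * R :=
  (Derive (fun v => fst (X v)) u, Derive (fun v => snd (X v)) u).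

Definition legendre (X nu : R -> R * R) : Prop :=
  periodic2pi X /\ periodic2pi nu /\ C1_curve X /\ C1_curve nu /\
  (forall u, on_unit_circle (nu u)) /\
  (forall u, dot (dcurve X u) (nu u) = 0).

Definition leg_ell (nu : R -> R * R) (u : R) : R := dot (dcurve nu u) (J (nu u)).
Definition leg_beta (X nu : R -> R * R) (u : R) : R := dot (dcurve X u) (J (nu u)).

Definition slice (F : R -> R -> R * R) (t : R) : R -> R * R := fun u => F u t.

Definition flow_of_legendre (X nu : R -> R -> R * R) : Prop :=
  forall t, 0 <= t -> legendre (slice X t) (slice nu t).

(** Iterated partial derivatives: [true] = d/du, [false] = d/dt. *)
Fixpoint pderiv (l : list bool) (f : R -> R -> R) : R -> R -> R :=
  match l with
  | nil => f
  | b :: l' =>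
      let g := pderiv l' f in
      if b then (fun u t => Derive (fun v => g v t) u)
      else (fun u t => Derive (fun s => g u s) t)
  end.

Definition smooth_pos (f : R -> R -> R) : Prop :=
  forall (l : list bool) (u t : R), 0 < t ->
    ex_derive (fun v => pderiv l f v t) u /\
    ex_derive (fun s => pderiv l f u s) t /\
    continuous (fun p : R * R => pderiv l f (fst p) (snd p)) (u, t).

Definition smooth_pos_curve (X : R -> R -> R * R) : Prop :=
  smooth_pos (fun u t => fst (X u t)) /\ smooth_pos (fun u t => snd (X u t)).

Definition cont_time_C1 (f : R -> R -> R) : Prop :=
  (forall t, 0 <= t -> C1_fun (fun u => f u t)) /\
  (forall t, 0 <= t -> forall eps, 0 < eps -> exists delta, 0 < delta /\
     forall s, 0 <= s -> Rabs (s - t) < delta -> forall u,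
       Rabs (f u s - f u t) <= eps /\
       Rabs (Derive (fun v => f v s) u - Derive (fun v => f v t) u) <= eps).

Definition cont_time_C1_curve (X : R -> R -> R * R) : Prop :=
  cont_time_C1 (fun u t => fst (X u t)) /\ cont_time_C1 (fun u t => snd (X u t)).

Definition normal_velocity (X nu : R -> R -> R * R) (u t : R) : R :=
  dot (Derive (fun s => fst (X u s)) t, Derive (fun s => snd (X u s)) t) (nu u t).

Definition inverse_curvature_flow (X nu : R -> R -> R * R) : Prop :=
  flow_of_legendre X nu /\
  cont_time_C1_curve X /\ cont_time_C1_curve nu /\
  smooth_pos_curve X /\ smooth_pos_curve nu /\
  (forall t u, 0 < t -> 0 < leg_ell (slice nu t) u) /\
  (forall t u, 0 < t ->
     normal_velocity X nu u t = leg_beta (slice X t) (slice nu t) u / leg_ell (slice nu t) u).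

Definition nu_star (n : nat) (u : R) : R * R := (sin (INR n * u), - cos (INR n * u)).

Definition admissible (n m : nat) (C1 C2 : R) : Prop :=
  ((1 <= m)%nat /\ m <> n /\ (C1 <> 0 \/ C2 <> 0)) \/
  (m = 0%nat /\ C1 <> 0 /\ C2 = 0).

Definition X_star_formula (n m : nat) (C1 C2 u : R) : R * R :=
  let d := INR n ^ 2 - INR m ^ 2 in
  let a := INR n / d in
  let b := INR m / d in
  let sn := sin (INR n * u) in let cn := cos (INR n * u) in
  let sm := sin (INR m * u) in let cm := cos (INR m * u) in
  (C1 * (a * sn * cm - b * cn * sm) + C2 * (a * sn * sm + b * cn * cm),
   C1 * (- a * cn * cm - b * sn * sm) + C2 * (- a * cn * sm + b * sn * cm)).

(* Main.v *)
Require Import Defs.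
From Stdlib Require Import Reals Lra Lia List ZArith Classical.
From Coquelicot Require Import Coquelicot.
Open Scope R_scope.


Fixpoint tp (L : list (R*R*R)) (u : R) : R :=
  match L with nil => 0 | (A,B,w)::L' => A * cos (w*u) + B * sin (w*u) + tp L' u end.
Fixpoint dtp (L : list (R*R*R)) : list (R*R*R) :=
  match L with nil => nil | (A,B,w)::L' => (B*w, -(A*w), w) :: dtp L' end.
Fixpoint tpb (L : list (R*R*R)) : R :=
  match L with nil => 0 | (A,B,w)::L' => Rabs A + Rabs B + tpb L' end.

Lemma tp_deriv L u : is_derive (tp L) u (tp (dtp L) u).
Proof.
induction L as [|[[A B] w] L IH]; simpl.
- apply (is_derive_const 0).
- apply (is_derive_plus (fun u => A * cos (w*u) + B * sin (w*u)) (tp L)); [|exact IH].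
  auto_derive; [exact I|]. ring.
Qed.

Lemma tp_ex L u : ex_derive (tp L) u.
Proof. eexists; apply tp_deriv. Qed.

Lemma Derive_tp L : forall u, Derive (tp L) u = tp (dtp L) u.
Proof. intro u; apply is_derive_unique, tp_deriv. Qed.

Lemma tp_cont L u : continuous (tp L) u.
Proof. apply (ex_derive_continuous (tp L)), tp_ex. Qed.

Lemma Rabs_cos_le x : Rabs (cos x) <= 1.
Proof. apply Rabs_le; apply COS_bound. Qed.
Lemma Rabs_sin_le x : Rabs (sin x) <= 1.
Proof. apply Rabs_le; apply SIN_bound. Qed.

Lemma tpb_bound L u : Rabs (tp L u) <= tpb L.
Proof.
induction L as [|[[A B] w] L IH]; simpl.
- rewrite Rabs_R0; lra.
- eapply Rle_trans; [apply Rabs_triang|].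
  eapply Rle_trans; [apply Rplus_le_compat_r, Rabs_triang|].
  rewrite !Rabs_mult.
  pose proof (Rabs_cos_le (w*u)); pose proof (Rabs_sin_le (w*u)).
  pose proof (Rabs_pos A); pose proof (Rabs_pos B).
  assert (Rabs A * Rabs (cos (w*u)) <= Rabs A) by (rewrite <- (Rmult_1_r (Rabs A)) at 2; apply Rmult_le_compat_l; lra).
  assert (Rabs B * Rabs (sin (w*u)) <= Rabs B) by (rewrite <- (Rmult_1_r (Rabs B)) at 2; apply Rmult_le_compat_l; lra).
  lra.
Qed.

Lemma tpb_pos L : 0 <= tpb L.
Proof. eapply Rle_trans; [apply Rabs_pos|apply (tpb_bound L 0)]. Qed.

Lemma locally_pos t : 0 < t -> locally t (fun s => 0 < s).
Proof. intro Ht. apply (open_gt 0 t Ht). Qed.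

Section Gen.
Variables (f : R -> R -> R) (K0 c : R) (L0 : list (R*R*R)).
Hypothesis Hf : forall u t, 0 <= t -> f u t = K0 * exp (c*t) * tp L0 u.

Lemma pderiv_form l : exists K L, forall u t, 0 < t -> pderiv l f u t = K * exp (c*t) * tp L u.
Proof.
induction l as [|b l IH].
- exists K0, L0; intros; simpl; apply Hf; lra.
- destruct IH as [K [L HL]]. destruct b; cbn [pderiv].
  + exists K, (dtp L). intros u t Ht.
    rewrite (Derive_ext _ (fun v => K * exp (c*t) * tp L v)) by (intro; apply HL; exact Ht).
    rewrite Derive_scal, Derive_tp. reflexivity.
  + exists (K*c), L. intros u t Ht.
    rewrite (Derive_ext_loc _ (fun s => K * exp (c*s) * tp L u)).
    * apply is_derive_unique. auto_derive; [exact I|]. ring.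
    * eapply filter_imp; [|apply (locally_pos t Ht)]. intros s Hs; apply HL; exact Hs.
Qed.

Lemma cont_form K L (u t : R) : continuous (fun p : R * R => K * exp (c * snd p) * tp L (fst p)) (u, t).
Proof.
apply (continuous_mult (fun p : R*R => K * exp (c * snd p)) (fun p : R*R => tp L (fst p))).
- apply (continuous_mult (fun _ : R*R => K) (fun p : R*R => exp (c * snd p))).
  + apply continuous_const.
  + apply (continuous_comp (fun p : R*R => snd p) (fun s => exp (c*s))).
    * apply continuous_snd.
    * apply (ex_derive_continuous (fun s => exp (c*s))). auto_derive. exact I.
- apply (continuous_comp (fun p : R*R => fst p) (tp L)).
  + apply continuous_fst.
  + apply tp_cont.
Qed.

Lemma gen_smooth : smooth_pos f.
Proof.
intros l u t Ht. destruct (pderiv_form l) as [K [L HL]]. split; [|split].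
- apply (ex_derive_ext (fun v => K * exp (c*t) * tp L v)).
  + intro; symmetry; apply HL; exact Ht.
  + apply ex_derive_scal, tp_ex.
- apply (ex_derive_ext_loc (fun s => K * exp (c*s) * tp L u)).
  + eapply filter_imp; [|apply (locally_pos t Ht)]. intros s Hs; symmetry; apply HL; exact Hs.
  + auto_derive. exact I.
- apply (continuous_ext_loc (fun p : R * R => pderiv l f (fst p) (snd p)) (fun p : R * R => K * exp (c * snd p) * tp L (fst p))).
  + assert (H := continuous_snd u t (fun x => 0 < x) (locally_pos t Ht)).
    eapply filter_imp; [|exact H]. intros [a b] Hb; simpl in *. symmetry; apply HL; exact Hb.
  + apply cont_form.
Qed.

Lemma gen_slice_Derive t : 0 <= t -> forall u, Derive (fun v => f v t) u = K0 * exp (c*t) * tp (dtp L0) u.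
Proof.
intros Ht u. rewrite (Derive_ext _ (fun v => K0 * exp (c*t) * tp L0 v)) by (intro; apply Hf; exact Ht).
rewrite Derive_scal, Derive_tp. reflexivity.
Qed.

Lemma gen_slice_C1 t : 0 <= t -> Defs.C1_fun (fun u => f u t).
Proof.
intros Ht. split.
- intro u. apply (ex_derive_ext (fun v => K0 * exp (c*t) * tp L0 v)).
  + intro; symmetry; apply Hf; exact Ht.
  + apply ex_derive_scal, tp_ex.
- intro u. apply (continuous_ext (fun u => K0 * exp (c*t) * tp (dtp L0) u)).
  + intro; symmetry; apply gen_slice_Derive; exact Ht.
  + apply (continuous_mult (fun _ => K0 * exp (c*t)) (tp (dtp L0))).
    * apply continuous_const.
    * apply tp_cont.
Qed.

Lemma gen_cont_time : cont_time_C1 f.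
Proof.
split; [exact gen_slice_C1|].
intros t Ht eps Heps.
set (M := Rabs K0 * (tpb L0 + tpb (dtp L0)) + 1).
assert (HM : 0 < M) by (unfold M; pose proof (tpb_pos L0); pose proof (tpb_pos (dtp L0)); pose proof (Rabs_pos K0);
   assert (0 <= Rabs K0 * (tpb L0 + tpb (dtp L0))) by (apply Rmult_le_pos; lra); lra).
assert (Hc : continuity_pt (fun s => exp (c*s)) t).
{ apply continuity_pt_filterlim. apply (ex_derive_continuous (fun s => exp (c*s))). auto_derive. exact I. }
pose proof (proj1 (continuity_pt_locally _ _) Hc) as Hc2. clear Hc. rename Hc2 into Hc.
destruct (Hc (mkposreal (eps / M) (Rdiv_lt_0_compat _ _ Heps HM))) as [d Hd].
exists d. split; [apply cond_pos|]. intros s Hs Hst u.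
assert (E : Rabs (exp (c*s) - exp (c*t)) < eps / M) by (apply Hd; exact Hst).
assert (key : forall B, Rabs B <= tpb L0 + tpb (dtp L0) -> Rabs (K0 * exp (c*s) * B - K0 * exp (c*t) * B) <= eps).
{ intros B HB.
  replace (K0 * exp (c*s) * B - K0 * exp (c*t) * B) with (K0 * B * (exp (c*s) - exp (c*t))) by ring.
  rewrite !Rabs_mult.
  apply Rle_trans with (Rabs K0 * Rabs B * (eps / M)).
  - apply Rmult_le_compat_l; [apply Rmult_le_pos; apply Rabs_pos|lra].
  - apply Rle_trans with ((M - 1) * (eps/M)).
    + apply Rmult_le_compat_r; [apply Rlt_le, Rdiv_lt_0_compat; lra|].
      unfold M. replace (Rabs K0 * (tpb L0 + tpb (dtp L0)) + 1 - 1) with (Rabs K0 * (tpb L0 + tpb (dtp L0))) by ring. apply Rmult_le_compat_l; [apply Rabs_pos|exact HB].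
    + apply Rle_trans with (M * (eps / M)); [apply Rmult_le_compat_r; [apply Rlt_le, Rdiv_lt_0_compat; lra|lra]|].
      right; field; lra. }
split.
- rewrite !Hf by lra. apply key. pose proof (tpb_bound L0 u); pose proof (tpb_pos (dtp L0)); lra.
- rewrite !gen_slice_Derive by lra. apply key. pose proof (tpb_bound (dtp L0) u); pose proof (tpb_pos L0); lra.
Qed.
End Gen.

Lemma sc1 x : sin x * sin x + cos x * cos x = 1.
Proof. pose proof (sin2_cos2 x). unfold Rsqr in H. exact H. Qed.

Lemma d_ne0 n m C1 C2 : (0 < n)%nat -> admissible n m C1 C2 -> INR n ^ 2 - INR m ^ 2 <> 0.
Proof.
intros Hn [[Hm [Hmn _]]|[Hm _]].
- assert (INR n <> INR m) by (apply not_INR; auto).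
  assert (0 < INR n) by (apply lt_0_INR; exact Hn).
  assert (0 <= INR m) by apply pos_INR.
  intro E. replace (INR n ^ 2 - INR m ^ 2) with ((INR n - INR m) * (INR n + INR m)) in E by ring.
  apply Rmult_integral in E. destruct E; [apply H; lra|lra].
- subst m. simpl. assert (0 < INR n) by (apply lt_0_INR; exact Hn). nra.
Qed.

Lemma Xf1_deriv n m C1 C2 u : INR n ^ 2 - INR m ^ 2 <> 0 ->
  is_derive (fun u => fst (X_star_formula n m C1 C2 u)) u
   ((C1 * cos (INR m * u) + C2 * sin (INR m * u)) * cos (INR n * u)).
Proof.
intros Hd. unfold X_star_formula; simpl. auto_derive; [exact I|]. field. intro E; apply Hd; rewrite <- E; ring.
Qed.
Lemma Xf2_deriv n m C1 C2 u : INR n ^ 2 - INR m ^ 2 <> 0 ->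
  is_derive (fun u => snd (X_star_formula n m C1 C2 u)) u
   ((C1 * cos (INR m * u) + C2 * sin (INR m * u)) * sin (INR n * u)).
Proof.
intros Hd. unfold X_star_formula; simpl. auto_derive; [exact I|]. field. intro E; apply Hd; rewrite <- E; ring.
Qed.

Lemma nu1_D n u : Derive (fun v => fst (nu_star n v)) u = INR n * cos (INR n * u).
Proof. apply is_derive_unique. unfold nu_star; simpl. auto_derive; [exact I|]. ring. Qed.
Lemma nu2_D n u : Derive (fun v => snd (nu_star n v)) u = INR n * sin (INR n * u).
Proof. apply is_derive_unique. unfold nu_star; simpl. auto_derive; [exact I|]. ring. Qed.

Lemma ell_nu n u : leg_ell (nu_star n) u = INR n.
Proof.
unfold leg_ell, dot, dcurve, J. rewrite nu1_D, nu2_D. unfold nu_star; simpl.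
pose proof (sc1 (INR n * u)). transitivity (INR n * (sin (INR n * u) * sin (INR n * u) + cos (INR n * u) * cos (INR n * u))); [ring|].
rewrite H; ring.
Qed.

Lemma beta_formula n m C1 C2 (Xs : R -> R * R) u : INR n ^ 2 - INR m ^ 2 <> 0 ->
  (forall u, Xs u = X_star_formula n m C1 C2 u) ->
  leg_beta Xs (nu_star n) u = C1 * cos (INR m * u) + C2 * sin (INR m * u).
Proof.
intros Hd HX. unfold leg_beta, dot, dcurve, J.
rewrite (Derive_ext (fun v => fst (Xs v)) (fun v => fst (X_star_formula n m C1 C2 v))) by (intro; rewrite HX; reflexivity).
rewrite (Derive_ext (fun v => snd (Xs v)) (fun v => snd (X_star_formula n m C1 C2 v))) by (intro; rewrite HX; reflexivity).
assert (E1 : Derive (fun v => fst (X_star_formula n m C1 C2 v)) u = (C1 * cos (INR m * u) + C2 * sin (INR m * u)) * cos (INR n * u)) by (apply is_derive_unique, Xf1_deriv; exact Hd).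
assert (E2 : Derive (fun v => snd (X_star_formula n m C1 C2 v)) u = (C1 * cos (INR m * u) + C2 * sin (INR m * u)) * sin (INR n * u)) by (apply is_derive_unique, Xf2_deriv; exact Hd).
rewrite E1, E2.
unfold nu_star; simpl. pose proof (sc1 (INR n * u)).
set (b := C1 * cos (INR m * u) + C2 * sin (INR m * u)).
transitivity (b * (sin (INR n * u) * sin (INR n * u) + cos (INR n * u) * cos (INR n * u))); [ring|]. rewrite H; ring.
Qed.

Lemma p_formula n m C1 C2 u :
  dot (X_star_formula n m C1 C2 u) (nu_star n u) =
  INR n / (INR n ^ 2 - INR m ^ 2) * (C1 * cos (INR m * u) + C2 * sin (INR m * u)).
Proof.
unfold dot, X_star_formula, nu_star; simpl. pose proof (sc1 (INR n * u)).
set (a := INR n / (INR n * (INR n * 1) - INR m * (INR m * 1))).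
set (b := INR m / (INR n * (INR n * 1) - INR m * (INR m * 1))).
transitivity (a * (C1 * cos (INR m * u) + C2 * sin (INR m * u)) * (sin (INR n * u) * sin (INR n * u) + cos (INR n * u) * cos (INR n * u))); [ring|]. rewrite H; ring.
Qed.

Lemma leg_beta_scale (Xs nu : R -> R * R) k u :
  leg_beta (fun v => (k * fst (Xs v), k * snd (Xs v))) nu u = k * leg_beta Xs nu u.
Proof. unfold leg_beta, dot, dcurve; simpl. rewrite !Derive_scal. ring. Qed.

Definition L1 n m C1 C2 : list (R*R*R) :=
  let d := INR n ^ 2 - INR m ^ 2 in let a := INR n / d in let b := INR m / d in
  ((C2*b - C2*a)/2, (C1*a - C1*b)/2, INR n + INR m) :: ((C2*a + C2*b)/2, (C1*a + C1*b)/2, INR n - INR m) :: nil.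
Definition L2 n m C1 C2 : list (R*R*R) :=
  let d := INR n ^ 2 - INR m ^ 2 in let a := INR n / d in let b := INR m / d in
  ((C1*b - C1*a)/2, (C2*b - C2*a)/2, INR n + INR m) :: ((-(C1*a) - C1*b)/2, (C2*a + C2*b)/2, INR n - INR m) :: nil.

Lemma X1_tp n m C1 C2 u : fst (X_star_formula n m C1 C2 u) = tp (L1 n m C1 C2) u.
Proof.
unfold X_star_formula, L1; simpl.
replace ((INR n + INR m) * u) with (INR n * u + INR m * u) by ring.
replace ((INR n - INR m) * u) with (INR n * u - INR m * u) by ring.
rewrite sin_plus, cos_plus, sin_minus, cos_minus. unfold Rdiv. generalize (/ (INR n * (INR n * 1) - INR m * (INR m * 1))); intro dd. field.
Qed.
Lemma X2_tp n m C1 C2 u : snd (X_star_formula n m C1 C2 u) = tp (L2 n m C1 C2) u.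
Proof.
unfold X_star_formula, L2; simpl.
replace ((INR n + INR m) * u) with (INR n * u + INR m * u) by ring.
replace ((INR n - INR m) * u) with (INR n * u - INR m * u) by ring.
rewrite sin_plus, cos_plus, sin_minus, cos_minus. unfold Rdiv. generalize (/ (INR n * (INR n * 1) - INR m * (INR m * 1))); intro dd. field.
Qed.

Lemma backward n (Xs : R -> R * R) (lam : R -> R) m C1 C2 :
  (0 < n)%nat -> legendre Xs (nu_star n) -> admissible n m C1 C2 ->
  (forall t, 0 <= t -> lam t = exp ((1 - INR m ^ 2 / INR n ^ 2) * t)) ->
  (forall u, Xs u = X_star_formula n m C1 C2 u) ->
  inverse_curvature_flow
     (fun u t => (lam t * fst (Xs u), lam t * snd (Xs u)))
     (fun u t => nu_star n u).
Proof.
intros Hn HL Had Hlam HX.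
pose proof (d_ne0 n m C1 C2 Hn Had) as Hd.
assert (Hnpos : 0 < INR n) by (apply lt_0_INR; exact Hn).
set (c := 1 - INR m ^ 2 / INR n ^ 2) in *.
destruct HL as [Hper [Hpern [HC1 [HC1n [Hunit Horth]]]]].
assert (F1 : forall u t, 0 <= t -> fst (lam t * fst (Xs u), lam t * snd (Xs u)) = 1 * exp (c*t) * tp (L1 n m C1 C2) u).
{ intros u t Ht; cbn [fst snd]. rewrite Hlam by exact Ht. rewrite HX, X1_tp. ring. }
assert (F2 : forall u t, 0 <= t -> snd (lam t * fst (Xs u), lam t * snd (Xs u)) = 1 * exp (c*t) * tp (L2 n m C1 C2) u).
{ intros u t Ht; cbn [fst snd]. rewrite Hlam by exact Ht. rewrite HX, X2_tp. ring. }
assert (G1 : forall u t : R, 0 <= t -> fst (nu_star n u) = 1 * exp (0*t) * tp ((0, 1, INR n) :: nil) u).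
{ intros u t _; simpl. rewrite Rmult_0_l, exp_0. ring. }
assert (G2 : forall u t : R, 0 <= t -> snd (nu_star n u) = 1 * exp (0*t) * tp ((-1, 0, INR n) :: nil) u).
{ intros u t _; simpl. rewrite Rmult_0_l, exp_0. ring. }
split; [|split; [|split; [|split; [|split; [|split]]]]].
- intros t Ht. unfold slice. split; [|split; [|split; [|split; [|split]]]].
  + intro u. simpl. rewrite Hper. reflexivity.
  + exact Hpern.
  + split.
    * exact (gen_slice_C1 _ 1 c (L1 n m C1 C2) F1 t Ht).
    * exact (gen_slice_C1 _ 1 c (L2 n m C1 C2) F2 t Ht).
  + exact HC1n.
  + exact Hunit.
  + intro u. unfold dcurve, dot; simpl. rewrite !Derive_scal.
    pose proof (Horth u) as H. unfold dcurve, dot in H; simpl in H.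
    transitivity (lam t * (Derive (fun v => fst (Xs v)) u * sin (INR n * u) + Derive (fun v => snd (Xs v)) u * - cos (INR n * u))); [ring|]. rewrite H; ring.
- split.
  + exact (gen_cont_time _ 1 c (L1 n m C1 C2) F1).
  + exact (gen_cont_time _ 1 c (L2 n m C1 C2) F2).
- split.
  + exact (gen_cont_time _ 1 0 _ G1).
  + exact (gen_cont_time _ 1 0 _ G2).
- split.
  + exact (gen_smooth _ 1 c (L1 n m C1 C2) F1).
  + exact (gen_smooth _ 1 c (L2 n m C1 C2) F2).
- split.
  + exact (gen_smooth _ 1 0 _ G1).
  + exact (gen_smooth _ 1 0 _ G2).
- intros t u Ht. unfold slice. change (0 < leg_ell (nu_star n) u). rewrite ell_nu. exact Hnpos.
- intros t u Ht. unfold slice.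
  change (normal_velocity (fun u t => (lam t * fst (Xs u), lam t * snd (Xs u))) (fun u t => nu_star n u) u t =
    leg_beta (fun v => (lam t * fst (Xs v), lam t * snd (Xs v))) (nu_star n) u / leg_ell (nu_star n) u).
  rewrite leg_beta_scale, ell_nu, (beta_formula n m C1 C2 Xs u Hd HX).
  unfold normal_velocity; simpl.
  assert (E : forall x, Derive (fun s => lam s * x) t = c * exp (c*t) * x).
  { intro x. rewrite (Derive_ext_loc _ (fun s => exp (c*s) * x)).
    - apply is_derive_unique. auto_derive; [exact I|]. ring.
    - eapply filter_imp; [|apply (locally_pos t Ht)]. intros s Hs; simpl. rewrite Hlam by lra. reflexivity. }
  rewrite !E. rewrite Hlam by lra.
  pose proof (p_formula n m C1 C2 u) as P. unfold dot, nu_star in P; cbn [fst snd] in P. rewrite HX. unfold dot, nu_star; cbn [fst snd].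
  transitivity (c * exp (c * t) * (fst (X_star_formula n m C1 C2 u) * sin (INR n * u) +
     snd (X_star_formula n m C1 C2 u) * - cos (INR n * u))); [ring|].
  rewrite P. unfold c. simpl in Hd |- *. field. split; [lra|]. intro E0; apply Hd; rewrite <- E0; ring.
Qed.

Lemma der_cpt f x l : is_derive f x l -> continuity_pt f x.
Proof. intro H. apply continuity_pt_filterlim. apply (ex_derive_continuous f). eexists; exact H. Qed.

Lemma mvt_help f df a b : a <= b -> (forall x, a <= x <= b -> is_derive f x (df x)) ->
  exists xi, a <= xi <= b /\ f b - f a = df xi * (b - a).
Proof.
intros Hab Hd.
destruct (MVT_gen f a b df) as [xi [Hxi E]].
- intros x Hx. rewrite Rmin_left, Rmax_right in Hx by lra. apply Hd; lra.
- intros x Hx. rewrite Rmin_left, Rmax_right in Hx by lra. apply (der_cpt f x (df x)), Hd; lra.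
- rewrite Rmin_left, Rmax_right in Hxi by lra. exists xi; split; [lra|exact E].
Qed.

Lemma deriv0_const f : (forall x, is_derive f x 0) -> forall a b, f a = f b.
Proof.
intros Hd a b. destruct (Rle_dec a b) as [H|H].
- destruct (mvt_help f (fun _ => 0) a b H) as [xi [_ E]]; [intros; apply Hd|]. lra.
- destruct (mvt_help f (fun _ => 0) b a) as [xi [_ E]]; [lra|intros; apply Hd|]. lra.
Qed.

Lemma deriv_mono f df : (forall x, is_derive f x (df x)) -> (forall x, 0 <= df x) ->
  forall a b, a <= b -> f a <= f b.
Proof.
intros Hd Hp a b Hab. destruct (mvt_help f df a b Hab) as [xi [_ E]]; [intros; apply Hd|].
assert (0 <= df xi * (b - a)) by (apply Rmult_le_pos; [apply Hp|lra]). lra.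
Qed.

Lemma lam_props (lam : R -> R) x : x <> 0 -> lam 0 = 1 ->
  (forall t, 0 < t -> ex_derive (fun s => lam s * x) t) ->
  (forall eps, 0 < eps -> exists delta, 0 < delta /\ forall s, 0 <= s -> Rabs (s - 0) < delta ->
        Rabs (lam s * x - lam 0 * x) <= eps) ->
  (forall t, 0 < t -> ex_derive lam t) /\
  (forall eps, 0 < eps -> exists delta, 0 < delta /\ forall s, 0 <= s -> s < delta -> Rabs (lam s - 1) <= eps).
Proof.
intros Hx H0 Hd Hc. split.
- intros t Ht. apply (ex_derive_ext (fun s => / x * (lam s * x))).
  + intro s. change (/ x * (lam s * x) = lam s). field. exact Hx.
  + apply ex_derive_scal, Hd, Ht.
- intros eps Heps. assert (Hax : 0 < Rabs x) by (apply Rabs_pos_lt; exact Hx).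
  destruct (Hc (eps * Rabs x)) as [d [Hdp Hdd]]; [apply Rmult_lt_0_compat; lra|].
  exists d; split; [exact Hdp|]. intros s Hs Hsd.
  assert (E := Hdd s Hs ltac:(rewrite Rminus_0_r, Rabs_pos_eq; lra)).
  rewrite H0 in E. replace (lam s * x - 1 * x) with ((lam s - 1) * x) in E by ring.
  rewrite Rabs_mult in E. apply Rmult_le_reg_r with (Rabs x); [exact Hax|exact E].
Qed.

Lemma lam_exp (lam : R -> R) c :
  lam 0 = 1 ->
  (forall t, 0 < t -> is_derive lam t (c * lam t)) ->
  (forall eps, 0 < eps -> exists delta, 0 < delta /\ forall s, 0 <= s -> s < delta -> Rabs (lam s - 1) <= eps) ->
  forall t, 0 <= t -> lam t = exp (c * t).
Proof.
intros H0 Hd Hc.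
set (g := fun t => lam t * exp (- c * t)).
assert (Hg : forall t, 0 < t -> is_derive g t 0).
{ intros t Ht.
  assert (Hde : is_derive (fun t => exp (- c * t)) t (- c * exp (- c * t))) by (auto_derive; [exact I|ring]).
  pose proof (is_derive_mult lam _ t _ _ (Hd t Ht) Hde (fun a b => Rmult_comm a b)) as H.
  unfold g. replace (0:R) with (plus (mult (c * lam t) (exp (- c * t))) (mult (lam t) (- c * exp (- c * t)))) by (unfold plus, mult; simpl; ring). exact H. }
assert (Hconst : forall a b, 0 < a -> 0 < b -> g a = g b).
{ intros a b Ha Hb. destruct (Rle_dec a b) as [H|H].
  - destruct (mvt_help g (fun _ => 0) a b H) as [xi [_ E]]; [intros; apply Hg; lra|]. lra.
  - destruct (mvt_help g (fun _ => 0) b a) as [xi [_ E]]; [lra|intros; apply Hg; lra|]. lra. }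
set (K := g 1).
assert (HK : forall t, 0 < t -> lam t = K * exp (c * t)).
{ intros t Ht. unfold K. rewrite <- (Hconst t 1 Ht Rlt_0_1). unfold g.
  rewrite Rmult_assoc, <- exp_plus. replace (- c * t + c * t) with 0 by ring. rewrite exp_0; ring. }
assert (K1 : K = 1).
{ apply NNPP. intro HK1.
  set (eps := Rabs (K - 1) / 2).
  assert (Heps : 0 < eps) by (unfold eps; apply Rdiv_lt_0_compat; [apply Rabs_pos_lt; lra|lra]).
  destruct (Hc eps Heps) as [d1 [Hd1 Hd1']].
  assert (Hce : continuity_pt (fun s => K * exp (c * s)) 0).
  { apply (der_cpt _ _ (K * (c * exp (c * 0)))). auto_derive; [exact I|]. ring. }
  destruct (proj1 (continuity_pt_locally _ _) Hce (mkposreal eps Heps)) as [d2 Hd2].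
  set (s := Rmin d1 d2 / 2).
  assert (Hs : 0 < s) by (unfold s; apply Rdiv_lt_0_compat; [apply Rmin_pos; [exact Hd1|apply cond_pos]|lra]).
  assert (Hs1 : s < d1) by (unfold s; pose proof (Rmin_l d1 d2); lra).
  assert (Hs2 : s < d2) by (unfold s; pose proof (Rmin_r d1 d2); pose proof (cond_pos d2); lra).
  assert (E1 := Hd1' s ltac:(lra) Hs1). rewrite HK in E1 by exact Hs.
  assert (E2 : Rabs (K * exp (c * s) - K * exp (c * 0)) < eps).
  { apply Hd2. change (Rabs (s - 0) < d2). rewrite Rminus_0_r, Rabs_pos_eq; lra. }
  rewrite Rmult_0_r, exp_0, Rmult_1_r in E2.
  pose proof (Rabs_triang (K - K * exp (c * s)) (K * exp (c * s) - 1)).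
  replace (K - K * exp (c * s) + (K * exp (c * s) - 1)) with (K - 1) in H by ring.
  rewrite (Rabs_minus_sym K (K * exp (c * s))) in H. unfold eps in *. lra. }
intros t Ht. destruct (Rle_lt_or_eq_dec 0 t Ht) as [Hp|He].
- rewrite HK, K1 by exact Hp. ring.
- subst t. rewrite H0, Rmult_0_r, exp_0. reflexivity.
Qed.

Lemma d_ne0' n m : (0 < n)%nat -> m <> n -> INR n ^ 2 - INR m ^ 2 <> 0.
Proof.
intros Hn Hmn.
assert (INR n <> INR m) by (apply not_INR; auto).
assert (0 < INR n) by (apply lt_0_INR; exact Hn).
assert (0 <= INR m) by apply pos_INR.
intro E. replace (INR n ^ 2 - INR m ^ 2) with ((INR n - INR m) * (INR n + INR m)) in E by ring.
apply Rmult_integral in E. destruct E; [apply H; lra|lra].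
Qed.

Lemma cos1_int w : 0 < w -> cos (w * (2 * PI)) = 1 -> exists m : nat, (1 <= m)%nat /\ w = INR m.
Proof.
intros Hw Hc. replace (w * (2 * PI)) with (2 * (w * PI)) in Hc by ring.
rewrite cos_2a_sin in Hc. assert (Hs : sin (w * PI) = 0) by nra.
destruct (sin_eq_0_0 _ Hs) as [k Hk].
assert (Hwk : w = IZR k) by (apply Rmult_eq_reg_r with PI; [exact Hk|apply Rgt_not_eq, PI_RGT_0]).
assert (Hk0 : (0 < k)%Z) by (apply lt_0_IZR; lra).
exists (Z.to_nat k). split; [lia|].
rewrite INR_IZR_INZ, Z2Nat.id by lia. exact Hwk.
Qed.

Lemma gen_E (f g : R -> R) w nn A B u : ex_derive f u -> ex_derive g u ->
  is_derive (fun v => w ^ 2 * (f v - (A * cos (w * v) + B * sin (w * v))) ^ 2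
                    + nn ^ 2 * (g v - w / nn * (- A * sin (w * v) + B * cos (w * v))) ^ 2) u
   (w ^ 2 * (2 * (f u - (A * cos (w * u) + B * sin (w * u))) * (Derive f u - w * (- A * sin (w * u) + B * cos (w * u))))
    + nn ^ 2 * (2 * (g u - w / nn * (- A * sin (w * u) + B * cos (w * u))) * (Derive g u - w / nn * w * (- A * cos (w * u) - B * sin (w * u))))).
Proof.
intros Hf Hg. auto_derive; [tauto|]. change (fun x : R => f x) with f. change (fun x : R => g x) with g. ring.
Qed.

Lemma dval (f : R -> R) (x l l' : R) : is_derive f x l -> l = l' -> is_derive f x l'.
Proof. intros H E; rewrite <- E; exact H. Qed.
Lemma sq0 x : x ^ 2 = 0 -> x = 0.
Proof. intro H. apply Rsqr_0_uniq. unfold Rsqr. simpl in H. lra. Qed.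

Section Fwd.
Variables (n : nat) (Xs : R -> R * R) (lam : R -> R).
Hypothesis Hn : (0 < n)%nat.
Hypothesis HL : legendre Xs (nu_star n).
Hypothesis Hnc : exists u v, Xs u <> Xs v.
Hypothesis H0 : lam 0 = 1.
Hypothesis HF : inverse_curvature_flow (fun u t => (lam t * fst (Xs u), lam t * snd (Xs u))) (fun u t => nu_star n u).

Definition nn := INR n.
Definition pp u := fst (Xs u) * sin (nn * u) + snd (Xs u) * - cos (nn * u).
Definition rr u := fst (Xs u) * cos (nn * u) + snd (Xs u) * sin (nn * u).
Definition bb u := leg_beta Xs (nu_star n) u.
Definition D1 u := Derive (fun v => fst (Xs v)) u.
Definition D2 u := Derive (fun v => snd (Xs v)) u.

Lemma nnpos : 0 < nn.
Proof. unfold nn; apply lt_0_INR; exact Hn. Qed.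

Lemma ex1 u : ex_derive (fun v => fst (Xs v)) u.
Proof. destruct HL as [_ [_ [[[H _] _] _]]]. apply H. Qed.
Lemma ex2 u : ex_derive (fun v => snd (Xs v)) u.
Proof. destruct HL as [_ [_ [[_ [H _]] _]]]. apply H. Qed.

Lemma orth u : D1 u * sin (nn * u) + D2 u * - cos (nn * u) = 0.
Proof. destruct HL as [_ [_ [_ [_ [_ H]]]]]. pose proof (H u) as E. unfold dot, dcurve, nu_star in E; simpl in E. exact E. Qed.

Lemma bb_eq u : bb u = D1 u * cos (nn * u) + D2 u * sin (nn * u).
Proof. unfold bb, leg_beta, dot, dcurve, J, nu_star, D1, D2, nn; simpl. ring. Qed.

Lemma gen_d1 (f g : R -> R) u : ex_derive f u -> ex_derive g u ->
  is_derive (fun v => f v * sin (nn * v) + g v * - cos (nn * v)) u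
    (Derive f u * sin (nn * u) + f u * (nn * cos (nn * u)) + (Derive g u * - cos (nn * u) + g u * (nn * sin (nn * u)))).
Proof. intros Hf Hg. auto_derive; [tauto|]. change (fun x : R => f x) with f. change (fun x : R => g x) with g. ring. Qed.
Lemma gen_d2 (f g : R -> R) u : ex_derive f u -> ex_derive g u ->
  is_derive (fun v => f v * cos (nn * v) + g v * sin (nn * v)) u
    (Derive f u * cos (nn * u) - f u * (nn * sin (nn * u)) + (Derive g u * sin (nn * u) + g u * (nn * cos (nn * u)))).
Proof. intros Hf Hg. auto_derive; [tauto|]. change (fun x : R => f x) with f. change (fun x : R => g x) with g. ring. Qed.

Lemma dp u : is_derive pp u (nn * rr u).
Proof.
pose proof (gen_d1 (fun v => fst (Xs v)) (fun v => snd (Xs v)) u (ex1 u) (ex2 u)) as G.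
unfold pp. replace (nn * rr u) with (Derive (fun v => fst (Xs v)) u * sin (nn * u) + fst (Xs u) * (nn * cos (nn * u)) + (Derive (fun v => snd (Xs v)) u * - cos (nn * u) + snd (Xs u) * (nn * sin (nn * u)))); [exact G|].
pose proof (orth u) as O. unfold D1, D2 in O. unfold rr.
transitivity (nn * (fst (Xs u) * cos (nn * u) + snd (Xs u) * sin (nn * u)) +
    (Derive (fun v => fst (Xs v)) u * sin (nn * u) + Derive (fun v => snd (Xs v)) u * - cos (nn * u))); [ring|].
rewrite O; ring.
Qed.

Lemma dr u : is_derive rr u (bb u - nn * pp u).
Proof.
pose proof (gen_d2 (fun v => fst (Xs v)) (fun v => snd (Xs v)) u (ex1 u) (ex2 u)) as G.
unfold rr. replace (bb u - nn * pp u) with (Derive (fun v => fst (Xs v)) u * cos (nn * u) - fst (Xs u) * (nn * sin (nn * u)) + (Derive (fun v => snd (Xs v)) u * sin (nn * u) + snd (Xs u) * (nn * cos (nn * u)))); [exact G|].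
rewrite bb_eq. unfold pp, D1, D2. ring.
Qed.

Lemma decomp u : Xs u = (pp u * sin (nn * u) + rr u * cos (nn * u), - pp u * cos (nn * u) + rr u * sin (nn * u)).
Proof.
pose proof (sc1 (nn * u)) as S.
rewrite (surjective_pairing (Xs u)) at 1. unfold pp, rr. f_equal.
- transitivity (fst (Xs u) * (sin (nn * u) * sin (nn * u) + cos (nn * u) * cos (nn * u))); [rewrite S; ring|ring].
- transitivity (snd (Xs u) * (sin (nn * u) * sin (nn * u) + cos (nn * u) * cos (nn * u))); [rewrite S; ring|ring].
Qed.

Lemma p_nonzero : exists u0, pp u0 <> 0.
Proof.
apply NNPP. intro H. destruct Hnc as [u [v Huv]]. apply Huv.
assert (Hp : forall u, pp u = 0) by (intro w; apply NNPP; intro Hw; apply H; exists w; exact Hw).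
assert (Hr : forall u, rr u = 0).
{ intro w. assert (E : Derive pp w = nn * rr w) by (apply is_derive_unique, dp).
  rewrite (Derive_ext pp (fun _ => 0)) in E by (intro; apply Hp).
  rewrite Derive_const in E. pose proof nnpos. apply Rmult_eq_reg_l with nn; [|lra]. lra. }
rewrite (decomp u), (decomp v), !Hp, !Hr. f_equal; ring.
Qed.

Lemma nu_per u : sin (nn * (u + 2 * PI)) = sin (nn * u) /\ cos (nn * (u + 2 * PI)) = cos (nn * u).
Proof.
replace (nn * (u + 2 * PI)) with (nn * u + 2 * INR n * PI) by (unfold nn; ring).
split; [apply sin_period|apply cos_period].
Qed.

Lemma p_per u : pp (u + 2 * PI) = pp u.
Proof. destruct HL as [Hper _]. unfold pp. rewrite Hper. destruct (nu_per u) as [A B]. rewrite A, B. reflexivity. Qed.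
Lemma r_per u : rr (u + 2 * PI) = rr u.
Proof. destruct HL as [Hper _]. unfold rr. rewrite Hper. destruct (nu_per u) as [A B]. rewrite A, B. reflexivity. Qed.

Lemma NV t u : 0 < t -> Derive lam t * pp u = lam t * bb u / nn.
Proof.
intro Ht. destruct HF as [_ [_ [_ [_ [_ [_ HNV]]]]]].
pose proof (HNV t u Ht) as E. unfold slice in E.
change (normal_velocity (fun u t => (lam t * fst (Xs u), lam t * snd (Xs u))) (fun u t => nu_star n u) u t =
    leg_beta (fun v => (lam t * fst (Xs v), lam t * snd (Xs v))) (nu_star n) u / leg_ell (nu_star n) u) in E.
rewrite leg_beta_scale, ell_nu in E. unfold normal_velocity, dot in E; simpl in E.
rewrite !Derive_scal_l in E. unfold pp, bb, nn. rewrite <- E. unfold nu_star; simpl. ring.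
Qed.

Lemma lamP : (forall t, 0 < t -> ex_derive lam t) /\
  (forall eps, 0 < eps -> exists delta, 0 < delta /\ forall s, 0 <= s -> s < delta -> Rabs (lam s - 1) <= eps).
Proof.
destruct HF as [_ [[Hc1 Hc2] [_ [[Hs1 Hs2] _]]]].
destruct p_nonzero as [u0 Hu0].
destruct (Req_dec (fst (Xs u0)) 0) as [Z1|Z1].
- assert (Z2 : snd (Xs u0) <> 0) by (intro Z2; apply Hu0; unfold pp; rewrite Z1, Z2; ring).
  apply (lam_props lam (snd (Xs u0)) Z2 H0).
  + intros t Ht. destruct (Hs2 nil u0 t Ht) as [_ [E _]]. simpl in E. exact E.
  + intros eps Heps. destruct Hc2 as [_ Hc]. destruct (Hc 0 (Rle_refl 0) eps Heps) as [d [Hd Hdd]].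
    exists d; split; [exact Hd|]. intros s Hs Hsd. apply (Hdd s Hs Hsd u0).
- apply (lam_props lam (fst (Xs u0)) Z1 H0).
  + intros t Ht. destruct (Hs1 nil u0 t Ht) as [_ [E _]]. simpl in E. exact E.
  + intros eps Heps. destruct Hc1 as [_ Hc]. destruct (Hc 0 (Rle_refl 0) eps Heps) as [d [Hd Hdd]].
    exists d; split; [exact Hd|]. intros s Hs Hsd. apply (Hdd s Hs Hsd u0).
Qed.

Lemma lam_c : exists c, (forall t, 0 <= t -> lam t = exp (c * t)) /\ (forall u, bb u = nn * c * pp u).
Proof.
destruct p_nonzero as [u0 Hu0]. destruct lamP as [Hd Hc]. pose proof nnpos as Hnp.
set (c := bb u0 / (nn * pp u0)).
assert (Hder : forall t, 0 < t -> is_derive lam t (c * lam t)).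
{ intros t Ht. assert (E := NV t u0 Ht).
  replace (c * lam t) with (Derive lam t).
  - apply Derive_correct, Hd, Ht.
  - unfold c. apply Rmult_eq_reg_r with (pp u0); [|exact Hu0]. rewrite E. field. split; [exact Hu0|lra]. }
pose proof (lam_exp lam c H0 Hder Hc) as Hl.
exists c. split; [exact Hl|].
intro u. assert (E := NV 1 u Rlt_0_1).
rewrite (is_derive_unique _ _ _ (Hder 1 Rlt_0_1)) in E. rewrite Hl in E by lra.
pose proof (exp_pos (c * 1)).
apply Rmult_eq_reg_l with (exp (c * 1) / nn); [|apply Rgt_not_eq, Rdiv_lt_0_compat; lra].
transitivity (c * exp (c * 1) * pp u); [|field; lra]. rewrite E. field. lra.
Qed.

Lemma dr' c : (forall u, bb u = nn * c * pp u) -> forall u, is_derive rr u (nn * (c - 1) * pp u).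
Proof. intros Hb u. replace (nn * (c - 1) * pp u) with (bb u - nn * pp u) by (rewrite Hb; ring). apply dr. Qed.

Lemma case_gt c : (forall u, bb u = nn * c * pp u) -> 1 < c -> False.
Proof.
intros Hb Hc. destruct p_nonzero as [u0 Hu0]. pose proof nnpos as Hnp.
set (g := fun u => pp u * rr u).
set (dg := fun u => nn * rr u * rr u + pp u * (nn * (c - 1) * pp u)).
assert (Hdg : forall u, is_derive g u (dg u)).
{ intro u. pose proof (is_derive_mult pp rr u _ _ (dp u) (dr' c Hb u) (fun a b => Rmult_comm a b)) as H.
  unfold g, dg. replace (nn * rr u * rr u + pp u * (nn * (c - 1) * pp u)) with
   (plus (mult (nn * rr u) (rr u)) (mult (pp u) (nn * (c - 1) * pp u))) by (unfold plus, mult; simpl; ring). exact H. }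
assert (Hpos : forall u, 0 <= dg u).
{ intro u. unfold dg. assert (0 <= rr u * rr u) by nra. assert (0 <= pp u * pp u) by nra.
  assert (0 <= nn * (rr u * rr u)) by (apply Rmult_le_pos; lra).
  assert (0 <= nn * (c - 1) * (pp u * pp u)) by (apply Rmult_le_pos; [apply Rmult_le_pos|]; lra). nra. }
assert (Hmono := deriv_mono g dg Hdg Hpos).
assert (Hper : g (u0 - PI + 2 * PI) = g (u0 - PI)) by (unfold g; rewrite p_per, r_per; reflexivity).
assert (Hloc : locally u0 (fun y => g y = g (u0 - PI))).
{ exists (mkposreal PI PI_RGT_0). intros y Hy. change (Rabs (y - u0) < PI) in Hy.
  apply Rabs_lt_between' in Hy.
  assert (g (u0 - PI) <= g y) by (apply Hmono; lra).
  assert (g y <= g (u0 - PI + 2 * PI)) by (apply Hmono; lra). lra. }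
assert (E : Derive g u0 = Derive (fun _ => g (u0 - PI)) u0) by (apply Derive_ext_loc; exact Hloc).
rewrite Derive_const, (is_derive_unique _ _ _ (Hdg u0)) in E.
unfold dg in E. assert (Hsq : 0 < pp u0 * pp u0) by (pose proof (Rsqr_pos_lt _ Hu0) as Q; unfold Rsqr in Q; exact Q).
assert (0 <= nn * (rr u0 * rr u0)) by (apply Rmult_le_pos; nra).
assert (0 < nn * (c - 1) * (pp u0 * pp u0)) by (apply Rmult_lt_0_compat; [apply Rmult_lt_0_compat|]; lra).
nra.
Qed.

Lemma case_eq1 c : (forall t, 0 <= t -> lam t = exp (c * t)) -> (forall u, bb u = nn * c * pp u) -> c = 1 ->
  exists (m : nat) (C1 C2 : R),
     admissible n m C1 C2 /\
     (forall t, 0 <= t -> lam t = exp ((1 - INR m ^ 2 / INR n ^ 2) * t)) /\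
     (forall u, Xs u = X_star_formula n m C1 C2 u).
Proof.
intros Hl Hb Hc. subst c. destruct p_nonzero as [u0 Hu0]. pose proof nnpos as Hnp.
assert (Hr0 : forall u, is_derive rr u 0).
{ intro u. replace 0 with (nn * (1 - 1) * pp u) by ring. apply (dr' 1 Hb). }
assert (Hrc : forall u, rr u = rr 0) by (intro u; apply (deriv0_const rr Hr0)).
set (h := fun u => pp u - nn * rr 0 * u).
assert (Hh : forall u, is_derive h u 0).
{ intro u. unfold h.
  assert (Hl1: is_derive (fun u => nn * rr 0 * u) u (nn * rr 0 * 1)) by (auto_derive; [exact I|ring]).
  pose proof (is_derive_minus _ _ u _ _ (dp u) Hl1) as H.
  apply (dval _ _ _ _ H). unfold minus, plus, opp; simpl; rewrite (Hrc u); ring. }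
assert (Hpl : forall u, pp u = pp 0 + nn * rr 0 * u).
{ intro u. pose proof (deriv0_const h Hh u 0) as E. unfold h in E. lra. }
assert (Hr00 : rr 0 = 0).
{ pose proof (p_per 0) as E. rewrite Rplus_0_l, (Hpl (2 * PI)) in E.
  pose proof PI_RGT_0. assert (nn * rr 0 * (2 * PI) = 0) by lra.
  apply Rmult_integral in H1. destruct H1 as [H1|H1]; [|lra].
  apply Rmult_integral in H1. destruct H1; lra. }
assert (Hp : forall u, pp u = pp 0) by (intro u; rewrite Hpl, Hr00; ring).
assert (Hr : forall u, rr u = 0) by (intro u; rewrite Hrc; exact Hr00).
exists 0%nat, (nn * pp 0), 0. split; [|split].
- right. split; [reflexivity|split; [|reflexivity]].
  rewrite <- (Hp u0). intro E. apply Rmult_integral in E. destruct E; [lra|contradiction].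
- intros t Ht. rewrite Hl by exact Ht. f_equal. simpl. field. fold nn. lra.
- intro u. rewrite decomp, Hp, Hr. unfold X_star_formula. simpl. rewrite !Rmult_0_l, sin_0, cos_0.
  unfold nn. f_equal; field; fold nn; lra.
Qed.

Lemma D_zero_const : (forall u, D1 u = 0 /\ D2 u = 0) -> False.
Proof.
intro HD. destruct Hnc as [u [v Huv]]. apply Huv.
assert (A1 : forall x, is_derive (fun v => fst (Xs v)) x 0).
{ intro x. destruct (HD x) as [E _]. unfold D1 in E. rewrite <- E. apply Derive_correct, ex1. }
assert (A2 : forall x, is_derive (fun v => snd (Xs v)) x 0).
{ intro x. destruct (HD x) as [_ E]. unfold D2 in E. rewrite <- E. apply Derive_correct, ex2. }
rewrite (surjective_pairing (Xs u)), (surjective_pairing (Xs v)).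
f_equal; [apply (deriv0_const _ A1)|apply (deriv0_const _ A2)].
Qed.

Lemma case_lt c : (forall t, 0 <= t -> lam t = exp (c * t)) -> (forall u, bb u = nn * c * pp u) -> c < 1 ->
  exists (m : nat) (C1 C2 : R),
     admissible n m C1 C2 /\
     (forall t, 0 <= t -> lam t = exp ((1 - INR m ^ 2 / INR n ^ 2) * t)) /\
     (forall u, Xs u = X_star_formula n m C1 C2 u).
Proof.
intros Hl Hb Hc. destruct p_nonzero as [u0 Hu0]. pose proof nnpos as Hnp.
set (w := nn * sqrt (1 - c)).
assert (Hs : sqrt (1 - c) * sqrt (1 - c) = 1 - c) by (apply sqrt_sqrt; lra).
assert (Hsp : 0 < sqrt (1 - c)) by (apply sqrt_lt_R0; lra).
assert (Hw : 0 < w) by (unfold w; apply Rmult_lt_0_compat; lra).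
assert (Hw2 : w * w = nn * nn * (1 - c)) by (unfold w; transitivity (nn * nn * (sqrt (1 - c) * sqrt (1 - c))); [ring|rewrite Hs; ring]).
assert (Hcw : c = 1 - w * w / (nn * nn)) by (rewrite Hw2; field; lra).
set (A := pp 0). set (B := nn * rr 0 / w).
set (P := fun u => A * cos (w * u) + B * sin (w * u)).
set (Rr := fun u => w / nn * (- A * sin (w * u) + B * cos (w * u))).
set (E := fun v => w ^ 2 * (pp v - (A * cos (w * v) + B * sin (w * v))) ^ 2
                    + nn ^ 2 * (rr v - w / nn * (- A * sin (w * v) + B * cos (w * v))) ^ 2).
assert (HE : forall u, is_derive E u 0).
{ intro u. pose proof (gen_E pp rr w nn A B u (ex_intro _ _ (dp u)) (ex_intro _ _ (dr' c Hb u))) as G.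
  apply (dval _ _ _ _ G).
  rewrite (is_derive_unique _ _ _ (dp u)), (is_derive_unique _ _ _ (dr' c Hb u)).
  rewrite Hcw. field. lra. }
assert (E0 : E 0 = 0).
{ unfold E. rewrite Rmult_0_r, sin_0, cos_0. unfold B, A. field. lra. }
assert (Heq : forall u, pp u = P u /\ rr u = Rr u).
{ intro u. pose proof (deriv0_const E HE u 0) as Eu. rewrite E0 in Eu. unfold E in Eu.
  set (a := pp u - (A * cos (w * u) + B * sin (w * u))) in Eu.
  set (b := rr u - w / nn * (- A * sin (w * u) + B * cos (w * u))) in Eu.
  assert (0 <= w ^ 2 * a ^ 2) by (apply Rmult_le_pos; apply pow2_ge_0).
  assert (0 <= nn ^ 2 * b ^ 2) by (apply Rmult_le_pos; apply pow2_ge_0).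
  assert (Ha : w ^ 2 * a ^ 2 = 0) by lra. assert (Hb2 : nn ^ 2 * b ^ 2 = 0) by lra.
  apply Rmult_integral in Ha. apply Rmult_integral in Hb2.
  destruct Ha as [Ha|Ha]; [apply sq0 in Ha; lra|apply sq0 in Ha].
  destruct Hb2 as [Hb2|Hb2]; [apply sq0 in Hb2; lra|apply sq0 in Hb2].
  unfold a in Ha; unfold b in Hb2; unfold P, Rr; split; lra. }
assert (HAB : A <> 0 \/ B <> 0).
{ apply NNPP. intro H. apply Hu0. rewrite (proj1 (Heq u0)). unfold P.
  assert (A = 0) by (apply NNPP; intro; apply H; left; assumption).
  assert (B = 0) by (apply NNPP; intro; apply H; right; assumption).
  rewrite H1, H2. ring. }
set (Cc := cos (w * (2 * PI))). set (S := sin (w * (2 * PI))).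
assert (e1 : A * Cc + B * S = A).
{ pose proof (p_per 0) as Q. rewrite Rplus_0_l in Q. rewrite (proj1 (Heq (2 * PI))) in Q.
  unfold P in Q. exact Q. }
assert (e2 : - A * S + B * Cc = B).
{ pose proof (r_per 0) as Q. rewrite Rplus_0_l in Q. rewrite (proj2 (Heq (2 * PI))), (proj2 (Heq 0)) in Q.
  unfold Rr in Q. rewrite Rmult_0_r, sin_0, cos_0 in Q.
  apply Rmult_eq_reg_l with (w / nn); [|apply Rgt_not_eq, Rdiv_lt_0_compat; lra].
  transitivity (w / nn * (- A * 0 + B * 1)); [exact Q|ring]. }
assert (sc : S * S + Cc * Cc = 1) by apply sc1.
assert (HC1 : Cc = 1).
{ assert (K1 : (2 - 2 * Cc) * A = 0).
  { transitivity ((Cc - 1) * (A * Cc + B * S - A) - S * (- A * S + B * Cc - B) + A * (1 - (S * S + Cc * Cc))); [ring|].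
    rewrite e1, e2, sc. ring. }
  assert (K2 : (2 - 2 * Cc) * B = 0).
  { transitivity (S * (A * Cc + B * S - A) + (Cc - 1) * (- A * S + B * Cc - B) + B * (1 - (S * S + Cc * Cc))); [ring|].
    rewrite e1, e2, sc. ring. }
  destruct HAB as [HA|HB].
  - apply Rmult_integral in K1. destruct K1; [lra|contradiction].
  - apply Rmult_integral in K2. destruct K2; [lra|contradiction]. }
destruct (cos1_int w Hw HC1) as [m [Hm1 Hwm]].
assert (Hmn : m <> n).
{ intro Hmn. subst m. apply D_zero_const. intro u.
  assert (c = 0).
  { fold nn in Hwm. rewrite Hwm in Hw2. assert (nn * nn * c = 0) by lra.
    apply Rmult_integral in H. destruct H as [H|H]; [|exact H]. nra. }
  pose proof (Hb u) as Bu. rewrite H, Rmult_0_r, Rmult_0_l, bb_eq in Bu.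
  pose proof (orth u) as O. pose proof (sc1 (nn * u)) as S1.
  split.
  - transitivity (cos (nn * u) * (D1 u * cos (nn * u) + D2 u * sin (nn * u)) + sin (nn * u) * (D1 u * sin (nn * u) + D2 u * - cos (nn * u))).
    + transitivity (D1 u * (sin (nn * u) * sin (nn * u) + cos (nn * u) * cos (nn * u))); [rewrite S1; ring|ring].
    + rewrite Bu, O; ring.
  - transitivity (sin (nn * u) * (D1 u * cos (nn * u) + D2 u * sin (nn * u)) - cos (nn * u) * (D1 u * sin (nn * u) + D2 u * - cos (nn * u))).
    + transitivity (D2 u * (sin (nn * u) * sin (nn * u) + cos (nn * u) * cos (nn * u))); [rewrite S1; ring|ring].
    + rewrite Bu, O; ring. }
pose proof (d_ne0' n m Hn Hmn) as Hd.
set (d := INR n ^ 2 - INR m ^ 2) in *.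
exists m, (A * d / nn), (B * d / nn). split; [|split].
- left. split; [exact Hm1|split; [exact Hmn|]].
  destruct HAB as [HA|HB]; [left|right]; intro Z; apply Rmult_integral in Z; (destruct Z as [Z|Z];
    [apply Rmult_integral in Z; destruct Z; contradiction|apply Rinv_neq_0_compat in Z; [exact Z|lra]]).
- intros t Ht. rewrite Hl by exact Ht. f_equal. f_equal. rewrite <- Hwm. fold nn.
  rewrite Hcw. field. lra.
- intro u. rewrite decomp, (proj1 (Heq u)), (proj2 (Heq u)). unfold P, Rr, X_star_formula.
  rewrite Hwm. unfold d in *. unfold nn. cbv zeta. cbn [fst snd].
  fold nn. f_equal; field; (split; [exact Hd|lra]).
Qed.

Lemma forward : exists (m : nat) (C1 C2 : R),
     admissible n m C1 C2 /\
     (forall t, 0 <= t -> lam t = exp ((1 - INR m ^ 2 / INR n ^ 2) * t)) /\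
     (forall u, Xs u = X_star_formula n m C1 C2 u).
Proof.
destruct lam_c as [c [Hl Hb]]. destruct (Rtotal_order c 1) as [H|[H|H]].
- apply (case_lt c Hl Hb H).
- apply (case_eq1 c Hl Hb H).
- exfalso; apply (case_gt c Hb H).
Qed.
End Fwd.

Theorem theorem1p2 (n : nat) (Xs : R -> R * R) (lam : R -> R) :
  (0 < n)%nat ->
  legendre Xs (nu_star n) ->
  (exists u v, Xs u <> Xs v) ->
  lam 0 = 1 ->
  (inverse_curvature_flow
     (fun u t => (lam t * fst (Xs u), lam t * snd (Xs u)))
     (fun u t => nu_star n u)
   <->
   exists (m : nat) (C1 C2 : R),
     admissible n m C1 C2 /\
     (forall t, 0 <= t -> lam t = exp ((1 - INR m ^ 2 / INR n ^ 2) * t)) /\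
     (forall u, Xs u = X_star_formula n m C1 C2 u))
  /\
  (forall (m : nat) (C1 C2 : R),
     admissible n m C1 C2 ->
     (forall t, 0 <= t -> lam t = exp ((1 - INR m ^ 2 / INR n ^ 2) * t)) ->
     (forall u, Xs u = X_star_formula n m C1 C2 u) ->
     forall u, leg_ell (nu_star n) u = INR n /\
               leg_beta Xs (nu_star n) u = C1 * cos (INR m * u) + C2 * sin (INR m * u)).
Proof.
intros Hn HL Hnc H0. split; [split|].
- intro HF. exact (forward n Xs lam Hn HL Hnc H0 HF).
- intros [m [C1 [C2 [Had [Hl HX]]]]]. exact (backward n Xs lam m C1 C2 Hn HL Had Hl HX).
- intros m C1 C2 Had Hl HX u. split.
  + apply ell_nu.
  + apply beta_formula; [apply (d_ne0 n m C1 C2 Hn Had)|exact HX].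
Qed.
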